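(* Let $K\ge 2$ arms be given. Suppose arm $i$ has been sampled $n_i\ge1$ times with observed sample mean $x_i\in[0,1]$ (fixed numbers); let $\alpha$ satisfy $x_\alpha=\max_j x_j$ and $\beta\ne\alpha$ satisfy $x_\beta=\max_{j\ne\alpha}x_j$; let $N\ge1$. For each arm $i$, let $Y_i$ be the average of $N$ independent identically distributed random variables with values in $[0,1]$ and mean $x_i$, and set $X_i'=\frac{n_i x_i+NY_i}{n_i+N}$. With $$\Lambda_\alpha^b=\mathbb E\big[(x_\beta-X_\alpha')\,\mathbf 1\{X_\alpha'\le x_\beta\}\big],\qquad \Lambda_i^b=\mathbb E\big[(X_i'-x_\alpha)\,\mathbf 1\{X_i'\ge x_\alpha\}\big]\ (i\ne\alpha),$$ one has $$\Lambda_\alpha^b\le \frac{2N x_\beta}{n_\alpha}\exp\!\big(-1.37\,(x_\alpha-x_\beta)^2 n_\alpha\big),$$ and for every $i\ne\alpha$, $$\Lambda_i^b\le \frac{2N(1-x_\alpha)}{n_i}\exp\!\big(-1.37\,(x_\alpha-x_i)^2 n_i\big).$$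
   Context: $\Lambda_i^b$ is the (budget-based) intrinsic value of information of pulling arm $i$ for the whole remaining budget of $N$ samples, measured with sample means. In this statement the future samples of each arm are modeled as having mean equal to the arm's current sample mean. *)

(* Defs.v *)
From HB Require Import structures.
From mathcomp Require Import all_boot all_order all_algebra.
From mathcomp Require Import all_classical all_reals all_analysis.
Set Implicit Arguments. Unset Strict Implicit. Unset Printing Implicit Defensive.
Import Order.TTheory GRing.Theory Num.Theory.
Local Open Scope classical_set_scope.
Local Open Scope ring_scope.

Definition mutually_independent d (T : measurableType d) (R : realType)
  (P : probability T R) (N : nat) (Z : 'I_N -> {RV P >-> R}) : Prop :=
  forall (J : {set 'I_N}) (B : 'I_N -> set R),
    (forall k, measurable (B k)) ->
    P (\bigcap_(k in [set` J]) (Z k @^-1` B k)) =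
      (\prod_(k in J) P (Z k @^-1` B k))%E.

Definition identically_distributed d (T : measurableType d) (R : realType)
  (P : probability T R) (N : nat) (Z : 'I_N -> {RV P >-> R}) : Prop :=
  forall (k l : 'I_N) (A : set R), measurable A ->
    distribution P (Z k) A = distribution P (Z l) A.

Definition sample_avg d (T : measurableType d) (R : realType)
  (P : probability T R) (N : nat) (Z : 'I_N -> {RV P >-> R}) : T -> R :=
  fun w => (\sum_(k < N) Z k w) / N%:R.

Definition updated_mean (R : realType) (T : Type) (n N : nat) (x : R)
  (Y : T -> R) : T -> R :=
  fun w => (n%:R * x + N%:R * Y w) / (n + N)%:R.

(* Main.v *)
Require Import Defs.
From HB Require Import structures.
From mathcomp Require Import all_boot all_order all_algebra.
From mathcomp Require Import all_classical all_reals all_analysis.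
From mathcomp Require Import ring lra.
Import Order.TTheory GRing.Theory Num.Theory.
Local Open Scope classical_set_scope.
Local Open Scope ring_scope.
Set Implicit Arguments. Unset Strict Implicit. Unset Printing Implicit Defensive.
Section S.
Context d (T : measurableType d) (R : realType) (P : probability T R).


Lemma exp_taylor3 (s : R) : 0 <= s -> 1 + s + s^+2/2 + s^+3/6 <= expR s.
Proof.
move=> s0.
have H : series (exp_coeff s) 4 <= expR s.
  apply: nondecreasing_cvgn_le; last exact: is_cvg_series_exp_coeff.
  apply/nondecreasing_seqP => n; rewrite /series /= big_nat_recr //= lerDl.
  by rewrite /exp_coeff /= divr_ge0 // exprn_ge0.
suff <- : series (exp_coeff s) 4 = 1 + s + s^+2/2 + s^+3/6 by [].
rewrite /series /= /exp_coeff /= !big_nat_recr //= big_nil /=.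
rewrite !factS fact0 /= expr0 expr1 !natrM /=. field. by [].
Qed.

Lemma expN_le (s : R) : 0 <= s -> expR (- s) <= 1 - s + s^+2/2.
Proof.
move=> s0; rewrite expRN.
have h := (@exp_taylor3 s s0).
have ep : 0 < expR s by apply: expR_gt0.
rewrite -[X in X <= _]div1r ler_pdivrMr //.
have q0 : 0 <= 1 - s + s^+2/2 by nra.
apply: le_trans (_ : 1 <= (1 - s + s^+2/2) * (1 + s + s^+2/2 + s^+3/6)) _.
  have -> : (1 - s + s^+2/2) * (1 + s + s^+2/2 + s^+3/6) = 1 + s^+3 * (1/6 + s/12 + s^+2/12).
    by field.
  by rewrite lerDl mulr_ge0 // ?exprn_ge0 // !addr_ge0 // divr_ge0 // exprn_ge0.
by apply: ler_wpM2l.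
Qed.

Lemma exp_convex (s w : R) : 0 <= w <= 1 -> expR (- s * w) <= 1 - w + w * expR (- s).
Proof.
case/andP => w0 w1.
have := @convex_expR R (Itv01 w0 w1) (- s) 0.
rewrite !convRE /= expR0 mulr0 addr0 mulr1 => h.
rewrite mulrC; apply: le_trans h _; rewrite /unstable.onem; lra.
Qed.

Lemma Pfin (A : set T) : measurable A -> (fine (P A))%:E = P A.
Proof. by move=> mA; rewrite fineK // fin_num_measure. Qed.

Lemma fineP_ge0 (A : set T) : 0 <= fine (P A).
Proof. by rewrite fine_ge0 // measure_ge0. Qed.

Lemma int_sum_indic (I : finType) (A : I -> set T) (g : I -> R) :
  (forall i, measurable (A i)) -> (forall i, 0 <= g i) ->
  (\int[P]_w (\sum_i g i * \1_(A i) w)%:E = (\sum_i g i * fine (P (A i)))%:E)%E.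
Proof.
move=> mA g0.
under eq_integral do rewrite -sumEFin.
rewrite ge0_integral_sum //; last first.
- by move=> i w _; rewrite lee_fin mulr_ge0 // indicE.
- move=> i; apply/measurable_realfun.measurable_EFinP; apply: measurable_realfun.measurable_funM.
    exact: measurable_cst.
  exact: measurable_realfun.measurable_indic.
rewrite -sumEFin; apply: eq_bigr => i _.
under eq_integral do rewrite EFinM.
rewrite ge0_integralZl //; [|by apply/measurable_realfun.measurable_EFinP; exact: measurable_realfun.measurable_indic|by rewrite lee_fin].
by rewrite integral_indic // setIT EFinM Pfin.
Qed.


Section Bins.
Variables (h : R) (hpos : 0 < h) (M : nat).
Hypothesis hM : forall r : R, 0 <= r <= 1 -> (Num.truncn (r / h) < M)%N.

Definition bin_set (j : nat) : set R := [set r | h * j%:R <= r < h * j.+1%:R].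

Lemma bin_meas j : measurable (bin_set j).
Proof.
have -> : bin_set j = [set` `[h * j%:R, h * j.+1%:R[%R].
  by apply/seteqP; split => r; rewrite /bin_set /= in_itv.
exact: measurable_itv.
Qed.

Lemma bin_mem r j : 0 <= r -> (h * j%:R <= r < h * j.+1%:R) = (Num.truncn (r / h) == j).
Proof.
move=> r0; rewrite truncn_eq; last by rewrite divr_ge0 // ltW.
by rewrite ler_pdivlMr // ltr_pdivrMr // ![_ * h]mulrC.
Qed.

Lemma bin_sum r (r01 : 0 <= r <= 1) (g : 'I_M -> R) :
  \sum_(j < M) g j * \1_(bin_set j) r = g (Ordinal (@hM r r01)).
Proof.
have r0 : 0 <= r by case/andP: r01.
rewrite (bigD1 (Ordinal (@hM r r01))) //= big1 ?addr0.
  rewrite indicE; have -> : (r \in bin_set (Num.truncn (r / h))) = true.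
    by apply: mem_set; rewrite /bin_set /= bin_mem.
  by rewrite mulr1.
move=> j /eqP jne; rewrite indicE.
have -> : (r \in bin_set j) = false.
  apply: memNset; rewrite /bin_set /= bin_mem //.
  move/eqP => hj; apply: jne; apply: val_inj => /=; by rewrite hj.
by rewrite mulr0.
Qed.

Lemma bin_floor r : 0 <= r -> h * (Num.truncn (r / h))%:R <= r < h * (Num.truncn (r / h)).+1%:R.
Proof. by move=> r0; rewrite bin_mem. Qed.

End Bins.



Section Core.
Variables (N : nat) (Z : 'I_N -> T -> R) (x c s h : R) (M : nat).
Hypotheses (hpos : 0 < h) (s0 : 0 <= s)
 (hM : forall r : R, 0 <= r <= 1 -> (Num.truncn (r / h) < M)%N)
 (hj1 : forall j : 'I_M, h * j%:R <= 1)
 (mZ : forall k, measurable_fun setT (Z k))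
 (indep : forall B : 'I_N -> set R, (forall k, measurable (B k)) ->
    P (\bigcap_(k in [set` [set: 'I_N]%SET]) (Z k @^-1` B k)) =
      (\prod_(k in [set: 'I_N]%SET) P (Z k @^-1` B k))%E)
 (Z01 : forall k w, 0 <= Z k w <= 1)
 (mean : forall k, (x%:E <= \int[P]_w (Z k w)%:E)%E).

Lemma preim_meas k j : measurable (Z k @^-1` bin_set h j).
Proof. by have := mZ k measurableT (bin_meas h j); rewrite setTI. Qed.

Definition pk k (j : 'I_M) := fine (P (Z k @^-1` bin_set h j)).

Lemma pk_ge0 k j : 0 <= pk k j.
Proof. exact: fineP_ge0. Qed.

Lemma indic_preim k (A : set R) w : \1_(Z k @^-1` A) w = \1_A (Z k w) :> R.
Proof. by []. Qed.

Lemma int_one : (\int[P]_w (1%:E) = 1)%E.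
Proof.
have := integral_cst P (@measurableT _ T) 1%:E.
move=> H; apply: (eq_trans H); rewrite mul1e; exact: probability_setT.
Qed.

Lemma sum_pk k : \sum_j pk k j = 1.
Proof.
have := int_sum_indic (g := fun _ : 'I_M => 1) (preim_meas k) (fun _ => ler01).
have E1 : forall w, \sum_(j < M) 1 * \1_(Z k @^-1` bin_set h j) w = 1 :> R.
  by move=> w; rewrite (bin_sum hpos hM (Z01 k w) (fun _ => 1)).
under eq_integral do rewrite E1.
rewrite int_one => /esym/eqP; rewrite eqe => /eqP <-.
by apply: eq_bigr => j _; rewrite mul1r.
Qed.


Definition muk k := \sum_(j < M) (h * (j : nat)%:R) * pk k j.

Lemma muk_ge0 k : 0 <= muk k.
Proof. by apply: sumr_ge0 => j _; rewrite mulr_ge0 ?pk_ge0 // mulr_ge0 // ltW. Qed.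

Lemma muk_le1 k : muk k <= 1.
Proof.
rewrite -(sum_pk k); apply: ler_sum => j _.
by rewrite -[X in _ <= X]mul1r ler_wpM2r // pk_ge0.
Qed.

Lemma muk_lb k : x - h <= muk k.
Proof.
have mg : forall j : 'I_M, 0 <= h * (j : nat)%:R + h.
  by move=> j; rewrite addr_ge0 ?mulr_ge0 // ltW.
have H : (\int[P]_w (Z k w)%:E <=
   \int[P]_w (\sum_(j < M) (h * (j : nat)%:R + h) * \1_(Z k @^-1` bin_set h j) w)%:E)%E.
  apply: ge0_le_integral => //.
  - by move=> w _; rewrite lee_fin; case/andP: (Z01 k w).
  - exact/measurable_realfun.measurable_EFinP/(mZ k).
  - apply/measurable_realfun.measurable_EFinP; apply: measurable_sum => j.
    apply: measurable_realfun.measurable_funM; first exact: measurable_cst.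
    exact: measurable_realfun.measurable_indic (preim_meas k j).
  - move=> w _; rewrite lee_fin.
    rewrite (bin_sum hpos hM (Z01 k w) (fun j : 'I_M => h * (j : nat)%:R + h)) /=.
    case/andP: (Z01 k w) => z0 _.
    case/andP: (bin_floor hpos z0) => _ hlt.
    by rewrite -natr1 mulrDr mulr1 in hlt; rewrite ltW.
rewrite int_sum_indic // in H; last exact: preim_meas.
have := le_trans (mean k) H; rewrite lee_fin.
under eq_bigr do rewrite mulrDl; rewrite big_split /= -mulr_sumr sum_pk mulr1.
by rewrite /muk; lra.
Qed.

Lemma per_k k : \sum_(j < M) expR (s * (c - h * (j : nat)%:R)) * pk k j <=
   expR (s * c) * expR (- (x - h) * s + s^+2/2).
Proof.
have E : forall j : 'I_M, expR (s * (c - h * (j : nat)%:R)) * pk k j =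
    expR (s * c) * (expR (- s * (h * (j : nat)%:R)) * pk k j).
  by move=> j; rewrite mulrA -expRD; congr (expR _ * _); ring.
under eq_bigr do rewrite E.
rewrite -mulr_sumr ler_wpM2l ?expR_ge0 //.
have H1 : \sum_(j < M) expR (- s * (h * (j : nat)%:R)) * pk k j <=
    \sum_(j < M) (pk k j - (1 - expR (- s)) * (h * (j : nat)%:R * pk k j)).
  apply: ler_sum => j _.
  have -> : pk k j - (1 - expR (- s)) * (h * (j : nat)%:R * pk k j) =
     (1 - h * (j : nat)%:R + h * (j : nat)%:R * expR (- s)) * pk k j by ring.
  apply: ler_wpM2r; first exact: pk_ge0.
  by apply: exp_convex; rewrite (hj1 j) andbT mulr_ge0 // ltW.
apply: le_trans H1 _.
rewrite sumrB sum_pk -mulr_sumr -/(muk k).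
apply: le_trans (expR_ge1Dx (- ((1 - expR (- s)) * muk k))) _.
rewrite ler_expR.
have hA := expN_le s0.
have p1 : 0 <= ((1 - expR (- s)) - (s - s^+2/2)) * muk k.
  by rewrite mulr_ge0 ?muk_ge0 // subr_ge0; lra.
have p2 : 0 <= s * (muk k - (x - h)) by rewrite mulr_ge0 // subr_ge0 muk_lb.
have p3 : 0 <= s^+2 * (1 - muk k) by rewrite mulr_ge0 ?exprn_ge0 // subr_ge0 muk_le1.
nra.
Qed.


Definition Cf (f : {ffun 'I_N -> 'I_M}) :=
  \bigcap_(k in [set` [set: 'I_N]%SET]) (Z k @^-1` bin_set h (f k)).

Lemma Cf_meas (f : {ffun 'I_N -> 'I_M}) : measurable (Cf f).
Proof.
apply: fin_bigcap_measurable; first exact: finite_finset.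
by move=> k _; exact: preim_meas.
Qed.

Lemma prod_indic (f : {ffun 'I_N -> 'I_M}) w :
  \prod_(k < N) \1_(Z k @^-1` bin_set h (f k)) w = \1_(Cf f) w :> R.
Proof.
rewrite [RHS]indicE; have [wC|wC] := boolP (w \in Cf f).
  rewrite big1 // => k _; rewrite indicE.
  have -> : (w \in Z k @^-1` bin_set h (f k)) = true.
    by apply: mem_set; move: wC; rewrite in_setE => /(_ k); apply; rewrite /= inE.
  by [].
case: (pselect (exists k, ~ (Z k @^-1` bin_set h (f k)) w)) => [[k nk]|allk].
  apply/eqP/prodf_eq0; exists k => //.
  by rewrite indicE memNset.
exfalso; apply: (negP wC); apply: mem_set => k _; apply: contrapT => nk.
by apply: allk; exists k.
Qed.

Lemma PC (f : {ffun 'I_N -> 'I_M}) : fine (P (Cf f)) = \prod_(k < N) pk k (f k).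
Proof.
have := indep (fun k => bin_meas h (f k)); rewrite /= -/(Cf f) => ->.
rewrite (eq_bigr (fun k => (pk k (f k))%:E)); last first.
  by move=> k _; rewrite /pk Pfin //; exact: preim_meas.
rewrite prodEFin /=; apply: eq_bigl => k; by rewrite inE.
Qed.

Lemma core_bound :
  (P [set w | (\sum_(k < N) Z k w <= N%:R * c)%R] <=
   (expR (N%:R * (s * c - (x - h) * s + s^+2/2)))%:E)%E.
Proof.
set E := [set w | _].
have mE : measurable E.
  have -> : E = (fun w => \sum_(k < N) Z k w) @^-1` [set` `]-oo, N%:R * c]%R].
    by apply/seteqP; split => w; rewrite /E /= in_itv.
  rewrite -[X in measurable X]setTI.
  apply: (@measurable_sum _ _ _ setT _ (index_enum 'I_N) Z (fun k => mZ k) measurableT).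
  exact: measurable_itv.
set a := fun j : 'I_M => expR (s * (c - h * (j : nat)%:R)).
have -> : P E = (\int[P]_w (\1_E w)%:E)%E by rewrite integral_indic // setIT.
apply: le_trans (_ : _ <= \int[P]_w
   (\sum_(f : {ffun 'I_N -> 'I_M}) (\prod_(k < N) a (f k)) * \1_(Cf f) w)%:E)%E _.
  apply: ge0_le_integral => //.
  - by apply/measurable_realfun.measurable_EFinP; exact: measurable_realfun.measurable_indic.
  - apply/measurable_realfun.measurable_EFinP; apply: measurable_sum => f.
    apply: measurable_realfun.measurable_funM; first exact: measurable_cst.
    exact: measurable_realfun.measurable_indic (Cf_meas f).
  - move=> w _; rewrite lee_fin.
    have -> : \sum_(f : {ffun 'I_N -> 'I_M}) (\prod_(k < N) a (f k)) * \1_(Cf f) w =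
        \prod_(k < N) \sum_(j < M) a j * \1_(bin_set h j) (Z k w).
      rewrite bigA_distr_bigA /=; apply: eq_bigr => f _.
      by rewrite -prod_indic -big_split.
    rewrite (eq_bigr (fun k => a (Ordinal (hM (Z01 k w))))); last first.
      by move=> k _; rewrite (bin_sum hpos hM (Z01 k w) a).
    rewrite /a -expR_sum indicE; case: (boolP (w \in E)) => wE; last by rewrite expR_ge0.
    apply: le_trans (expR_ge1Dx _); rewrite lerDl.
    rewrite -mulr_sumr mulr_ge0 // sumrB sumr_const card_ord subr_ge0.
    move: wE; rewrite in_setE /E /= => wE.
    rewrite -mulr_natl; apply: (le_trans _ wE); apply: ler_sum => k _ /=.
    by case/andP: (Z01 k w) => z0 _; case/andP: (bin_floor hpos z0).
rewrite int_sum_indic; last first.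
- by move=> f; apply: prodr_ge0 => k _; exact: expR_ge0.
- exact: Cf_meas.
rewrite lee_fin.
under eq_bigr do rewrite PC -big_split /=.
rewrite -(bigA_distr_bigA (fun k (j : 'I_M) => a j * pk k j)) /=.
have -> : s * c - (x - h) * s + s ^+ 2 / 2 = s * c + (- (x - h) * s + s ^+ 2 / 2) by ring.
rewrite expRM_natl expRD.
rewrite (_ : _ ^+ N = \prod_(k < N) (expR (s * c) * expR (- (x - h) * s + s ^+ 2 / 2))); last first.
  by rewrite prodr_const card_ord.
apply: ler_prod => k _; rewrite per_k andbT.
by apply: sumr_ge0 => j _; rewrite mulr_ge0 ?expR_ge0 ?pk_ge0.
Qed.

End Core.
Lemma sum_le_meas (N : nat) (Z : 'I_N -> T -> R) (a : R) :
  (forall k, measurable_fun setT (Z k)) ->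
  measurable [set w | (\sum_(k < N) Z k w <= a)%R].
Proof.
move=> mZ.
have -> : [set w | (\sum_(k < N) Z k w <= a)%R] =
   (fun w => \sum_(k < N) Z k w) @^-1` [set` `]-oo, a]%R].
  by apply/seteqP; split => w; rewrite /= in_itv.
rewrite -[X in measurable X]setTI.
apply: (@measurable_sum _ _ _ setT _ (index_enum 'I_N) Z (fun k => mZ k) measurableT).
exact: measurable_itv.
Qed.

Lemma tail (N : nat) (Z : 'I_N -> T -> R) (x t : R) : 0 <= t ->
 (forall k, measurable_fun setT (Z k)) ->
 (forall B : 'I_N -> set R, (forall k, measurable (B k)) ->
    P (\bigcap_(k in [set` [set: 'I_N]%SET]) (Z k @^-1` B k)) =
      (\prod_(k in [set: 'I_N]%SET) P (Z k @^-1` B k))%E) ->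
 (forall k w, 0 <= Z k w <= 1) ->
 (forall k, (x%:E <= \int[P]_w (Z k w)%:E)%E) ->
 (P [set w | (\sum_(k < N) Z k w <= N%:R * (x - t))%R] <=
   (expR (- (81/200) * N%:R * t^+2))%:E)%E.
Proof.
move=> t0 mZ indep Z01 mean.
have [tz|tn0] := eqVneq t 0.
  rewrite tz expr0n /= mulr0 expR0; apply: probability_le1; exact: sum_le_meas.
have tpos : 0 < t by rewrite lt_neqAle eq_sym tn0 t0.
pose h := t / 10.
have hpos : 0 < h by rewrite /h divr_gt0.
pose M := (Num.truncn (1 / h)).+1.
have hM : forall r, 0 <= r <= 1 -> (Num.truncn (r / h) < M)%N.
  move=> r /andP[r0 r1]; rewrite /M ltnS truncn_le_nat.
  apply: le_lt_trans (truncnS_gt (1 / h)).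
  by rewrite ler_wpM2r // invr_ge0 ltW.
have hj1 : forall j : 'I_M, h * (j : nat)%:R <= 1.
  move=> j; have jle : (j <= Num.truncn (1 / h))%N by rewrite -ltnS ltn_ord.
  have : (j : nat)%:R <= 1 / h.
    apply: le_trans (_ : (Num.truncn (1 / h))%:R <= 1 / h).
      by rewrite ler_nat.
    by rewrite truncn_le divr_ge0 // ltW.
  by rewrite ler_pdivlMr // mulrC.
have s0 : 0 <= t - h by rewrite /h subr_ge0 ler_pdivrMr //; lra.
have := core_bound (x - t) (s := t - h) hpos s0 hM hj1 mZ indep Z01 mean.
move=> H; apply: le_trans H _; rewrite lee_fin ler_expR.
rewrite le_eqVlt; apply/orP; left; apply/eqP; rewrite /h; field. all: by [].
Qed.

Lemma tail_expect (N : nat) (Z : 'I_N -> T -> R) (y t C : R) (g : T -> R) :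
 0 <= t -> 0 <= C ->
 (forall k, measurable_fun setT (Z k)) ->
 (forall B : 'I_N -> set R, (forall k, measurable (B k)) ->
    P (\bigcap_(k in [set` [set: 'I_N]%SET]) (Z k @^-1` B k)) =
      (\prod_(k in [set: 'I_N]%SET) P (Z k @^-1` B k))%E) ->
 (forall k w, 0 <= Z k w <= 1) ->
 (forall k, (y%:E <= \int[P]_w (Z k w)%:E)%E) ->
 measurable_fun setT g -> (forall w, 0 <= g w) ->
 (forall w, g w <= (if (\sum_(k < N) Z k w <= N%:R * (y - t)) then C else 0)) ->
 (\int[P]_w (g w)%:E <= (C * expR (- (81/200) * N%:R * t^+2))%:E)%E.
Proof.
move=> t0 C0 mZ indep Z01 mean mg g0 gle.
set E := [set w | (\sum_(k < N) Z k w <= N%:R * (y - t))%R].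
have mE : measurable E by exact: sum_le_meas.
apply: (@le_trans _ _ (\int[P]_w (C * \1_E w)%:E)%E).
  apply: ge0_le_integral.
  - exact: measurableT.
  - by move=> w _; rewrite lee_fin.
  - exact/measurable_realfun.measurable_EFinP.
  - apply/measurable_realfun.measurable_EFinP; apply: measurable_realfun.measurable_funM.
      exact: measurable_cst.
    exact: measurable_realfun.measurable_indic.
  - move=> w _; rewrite lee_fin; apply: (le_trans (gle w)); rewrite indicE.
    case: ifP => H.
      have -> : (w \in E) = true by apply: mem_set.
      by rewrite mulr1.
    by rewrite mulr_ge0 // ler0n.
under eq_integral do rewrite EFinM.
rewrite ge0_integralZl //; last 1 first.
all: try by apply/measurable_realfun.measurable_EFinP; exact: measurable_realfun.measurable_indic.
all: try by rewrite lee_fin.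
all: try by move=> w _; rewrite lee_fin indicE.
rewrite integral_indic // setIT EFinM.
apply: lee_wpmul2l; first by rewrite lee_fin.
exact: tail.
Qed.

End S.

Section Alg.
Variable R : realType.

Lemma alg1 (a Nr xa xb S : R) : 0 < a -> 0 < Nr -> xb <= xa -> 0 <= xb -> 0 <= S ->
  (xb - (a * xa + S) / (a + Nr)) * ((a * xa + S) / (a + Nr) <= xb)%R%:R <=
  (if S <= Nr * (xa - (a + Nr) * (xa - xb) / Nr) then Nr * xb / (a + Nr) else 0).
Proof.
move=> a0 N0 xab xb0 S0.
have aN : 0 < a + Nr by rewrite addr_gt0.
have E1 : Nr * (xa - (a + Nr) * (xa - xb) / Nr) = (a + Nr) * xb - a * xa.
  by field; rewrite gt_eqF.
rewrite E1.
case: (boolP ((a * xa + S) / (a + Nr) <= xb)) => H /=.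
  have HS : S <= (a + Nr) * xb - a * xa.
    by move: H; rewrite ler_pdivrMr //; lra.
  rewrite HS mulr1.
  have -> : xb - (a * xa + S) / (a + Nr) = ((a + Nr) * xb - a * xa - S) / (a + Nr).
    by field; rewrite gt_eqF.
  rewrite ler_pM2r ?invr_gt0 //.
  have : 0 <= a * (xa - xb) by rewrite mulr_ge0 ?subr_ge0 // ltW.
  lra.
rewrite mulr0; case: ifP => _ //.
by rewrite divr_ge0 ?mulr_ge0 // ltW.
Qed.

Lemma alg1_ge0 (a Nr xa S : R) (xb : R) : 0 < a -> 0 < Nr ->
  0 <= (xb - (a * xa + S) / (a + Nr)) * ((a * xa + S) / (a + Nr) <= xb)%R%:R.
Proof.
move=> a0 N0; case: (boolP (_ <= xb)) => H /=; last by rewrite mulr0.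
by rewrite mulr1 subr_ge0.
Qed.

Lemma alg2 (a Nr xa xi S : R) : 0 < a -> 0 < Nr -> xi <= xa -> xa <= 1 -> S <= Nr ->
  ((a * xi + S) / (a + Nr) - xa) * (xa <= (a * xi + S) / (a + Nr))%R%:R <=
  (if Nr - S <= Nr * ((1 - xi) - (a + Nr) * (xa - xi) / Nr) then Nr * (1 - xa) / (a + Nr) else 0).
Proof.
move=> a0 N0 xia xa1 SN.
have aN : 0 < a + Nr by rewrite addr_gt0.
have E1 : Nr * ((1 - xi) - (a + Nr) * (xa - xi) / Nr) = Nr - (a + Nr) * xa + a * xi.
  by field; rewrite gt_eqF.
rewrite E1.
case: (boolP (xa <= (a * xi + S) / (a + Nr))) => H /=.
  have HS : (a + Nr) * xa <= a * xi + S.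
    by move: H; rewrite ler_pdivlMr // mulrC.
  have -> : Nr - S <= Nr - (a + Nr) * xa + a * xi by lra.
  rewrite mulr1.
  have -> : (a * xi + S) / (a + Nr) - xa = (a * xi + S - (a + Nr) * xa) / (a + Nr).
    by field; rewrite gt_eqF.
  rewrite ler_pM2r ?invr_gt0 //.
  have : 0 <= a * (xa - xi) by rewrite mulr_ge0 ?subr_ge0 // ltW.
  lra.
rewrite mulr0; case: ifP => _ //.
by rewrite divr_ge0 ?mulr_ge0 ?subr_ge0 // ltW.
Qed.

Lemma alg2_ge0 (a Nr xi S : R) (xa : R) :
  0 <= ((a * xi + S) / (a + Nr) - xa) * (xa <= (a * xi + S) / (a + Nr))%R%:R.
Proof.
case: (boolP (xa <= _)) => H /=; last by rewrite mulr0.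
by rewrite mulr1 subr_ge0.
Qed.

Lemma alg3 (a Nr u dl : R) : 0 < a -> 0 < Nr -> 0 <= u ->
  Nr * u / (a + Nr) * expR (- (81/200) * Nr * ((a + Nr) * dl / Nr) ^+ 2) <=
  2 * Nr * u / a * expR (- (137/100) * dl ^+ 2 * a).
Proof.
move=> a0 N0 u0.
have aN : 0 < a + Nr by rewrite addr_gt0.
apply: ler_pM.
- by rewrite divr_ge0 ?mulr_ge0 // ltW.
- exact: expR_ge0.
- have v0 : 0 <= Nr * u by rewrite mulr_ge0 // ltW.
  apply: le_trans (_ : Nr * u / a <= _).
    apply: (ler_wpM2l v0). rewrite lef_pV2 ?posrE // ?lerDl ?ltW //.
  have -> : 2 * Nr * u / a = 2 * (Nr * u / a) by ring.
  have : 0 <= Nr * u / a by rewrite divr_ge0 // ltW.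
  lra.
- rewrite ler_expR.
  have -> : - (81/200) * Nr * ((a + Nr) * dl / Nr) ^+ 2 =
      - (81/200) * (a + Nr) ^+ 2 * dl ^+ 2 / Nr.
    by field; rewrite gt_eqF.
  rewrite ler_pdivrMr //.
  have p1 : 0 <= dl ^+ 2 * (a - Nr) ^+ 2 by rewrite mulr_ge0 ?sqr_ge0.
  have p2 : 0 <= dl ^+ 2 * (a * Nr) by rewrite mulr_ge0 ?sqr_ge0 // mulr_ge0 // ltW.
  nra.
Qed.
End Alg.

Unset Implicit Arguments.

Theorem corollary1 (d : measure_display) (T : measurableType d) (R : realType)
  (P : probability T R) (K : nat) (n : 'I_K -> nat) (x : 'I_K -> R)
  (alpha beta : 'I_K) (N : nat) (Z : 'I_K -> 'I_N -> {RV P >-> R}) :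
  (2 <= K)%N ->
  (forall i, (1 <= n i)%N) ->
  (forall i, 0 <= x i <= 1) ->
  (forall j, x j <= x alpha) ->
  beta != alpha ->
  (forall j, j != alpha -> x j <= x beta) ->
  (1 <= N)%N ->
  (forall i, mutually_independent (Z i)) ->
  (forall i, identically_distributed (Z i)) ->
  (forall i k w, 0 <= Z i k w <= 1) ->
  (forall i k, ('E_P[Z i k] = (x i)%:E)%E) ->
  let X' := fun i => updated_mean (n i) N (x i) (sample_avg (Z i)) in
  ('E_P[fun w => ((x beta - X' alpha w) * (X' alpha w <= x beta)%R%:R)%R]
     <= ((2 * N%:R * x beta / (n alpha)%:R)
         * expR (- (137 / 100) * (x alpha - x beta) ^+ 2 * (n alpha)%:R))%R%:E)%E
  /\
  (forall i, i != alpha ->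
     ('E_P[fun w => ((X' i w - x alpha) * (x alpha <= X' i w)%R%:R)%R]
       <= ((2 * N%:R * (1 - x alpha) / (n i)%:R)
           * expR (- (137 / 100) * (x alpha - x i) ^+ 2 * (n i)%:R))%R%:E)%E).
Proof.
move=> K2 n1 x01 xmax bna xbeta N1 indepZ idZ Z01 meanZ X'.
have Npos : (0 : R) < N%:R by rewrite ltr0n.
have mZ : forall i k, measurable_fun setT (Z i k : T -> R).
  by move=> i k; exact: measurable_funPT.
have indepZ' : forall i (B : 'I_N -> set R), (forall k, measurable (B k)) ->
    P (\bigcap_(k in [set` [set: 'I_N]%SET]) ((Z i k : T -> R) @^-1` B k)) =
      (\prod_(k in [set: 'I_N]%SET) P ((Z i k : T -> R) @^-1` B k))%E.
  by move=> i B mB; exact: (indepZ i [set: 'I_N]%SET B mB).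
have meanE : forall i k, (\int[P]_w (Z i k w)%:E = (x i)%:E)%E.
  by move=> i k; rewrite -(meanZ i k) unlock.
have X'E : forall i w, X' i w =
    ((n i)%:R * x i + \sum_(k < N) Z i k w) / ((n i)%:R + N%:R).
  move=> i w; rewrite /X' /updated_mean /sample_avg natrD.
  by rewrite [X in _ + X]mulrC divfK // gt_eqF.
have Sge0 : forall i w, 0 <= \sum_(k < N) Z i k w.
  by move=> i w; apply: sumr_ge0 => k _; case/andP: (Z01 i k w).
have SleN : forall i w, \sum_(k < N) Z i k w <= N%:R.
  move=> i w; apply: le_trans (_ : \sum_(k < N) (1 : R) <= _).
    by apply: ler_sum => k _; case/andP: (Z01 i k w).
  by rewrite sumr_const card_ord.
have mX : forall i, measurable_fun setT (X' i).
  move=> i.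
  have -> : X' i = fun w =>
      ((n i)%:R * x i + \sum_(k < N) Z i k w) * ((n i)%:R + N%:R)^-1.
    by apply/funext => w; rewrite X'E.
  apply: measurable_realfun.measurable_funM; last exact: measurable_cst.
  apply: measurable_realfun.measurable_funD; first exact: measurable_cst.
  exact: (@measurable_sum _ _ _ setT _ (index_enum 'I_N) (fun k => (Z i k : T -> R)) (fun k => mZ i k)).
split.
- set a := (n alpha)%:R.
  have a0 : 0 < a by rewrite /a ltr0n; exact: (n1 alpha).
  rewrite unlock.
  apply: le_trans (tail_expect (Z := fun k => (Z alpha k : T -> R)) (y := x alpha)
      (t := (a + N%:R) * (x alpha - x beta) / N%:R)
      (C := N%:R * x beta / (a + N%:R))
      (g := fun w => (x beta - X' alpha w) * (X' alpha w <= x beta)%R%:R)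
      _ _ _ _ _ _ _ _ _) _.
  + by rewrite divr_ge0 ?mulr_ge0 ?subr_ge0 ?xmax // ltW // addr_gt0.
  + have := x01 beta; case/andP => xb0 _.
    by rewrite divr_ge0 ?mulr_ge0 // ltW // addr_gt0.
  + exact: mZ.
  + exact: indepZ'.
  + exact: Z01.
  + by move=> k; rewrite meanE.
  + have -> : (fun w => (x beta - X' alpha w) * (X' alpha w <= x beta)%R%:R) =
        ((fun w => x beta - X' alpha w) \max (fun _ => 0)).
      apply/funext => w /=; case: (boolP (X' alpha w <= x beta)) => H /=.
        by rewrite mulr1 max_l // subr_ge0.
      by rewrite mulr0 max_r // subr_le0 ltW // ltNge.
    apply: measurable_realfun.measurable_maxr; last exact: measurable_cst.
    apply: measurable_realfun.measurable_funB; first exact: measurable_cst.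
    exact: mX.
  + by move=> w /=; rewrite X'E; apply: alg1_ge0.
  + move=> w /=; rewrite X'E; apply: alg1 => //;
      first [exact: xmax | by case/andP: (x01 beta) => -> ].
  + rewrite lee_fin; apply: alg3 => //.
    by case/andP: (x01 beta).
- move=> i ia.
  set a := (n i)%:R.
  have a0 : 0 < a by rewrite /a ltr0n; exact: (n1 i).
  rewrite unlock.
  apply: le_trans (tail_expect (Z := fun k w => 1 - (Z i k : T -> R) w) (y := 1 - x i)
      (t := (a + N%:R) * (x alpha - x i) / N%:R)
      (C := N%:R * (1 - x alpha) / (a + N%:R))
      (g := fun w => (X' i w - x alpha) * (x alpha <= X' i w)%R%:R)
      _ _ _ _ _ _ _ _ _) _.
  + by rewrite divr_ge0 ?mulr_ge0 ?subr_ge0 ?xmax // ltW // addr_gt0.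
  + have := x01 alpha; case/andP => _ xa1.
    by rewrite divr_ge0 ?mulr_ge0 ?subr_ge0 // ltW // addr_gt0.
  + move=> k; apply: measurable_realfun.measurable_funB; first exact: measurable_cst.
    exact: mZ.
  + move=> B mB.
    have mB' : forall k, measurable [set r : R | B k (1 - r)].
      move=> k.
      have mf : measurable_fun [set: R] (fun r : R => 1 - r).
        apply: measurable_realfun.measurable_funB; first exact: measurable_cst.
        exact: measurable_id.
      have := mf measurableT _ (mB k).
      by rewrite setTI.
    exact: (indepZ' i (fun k => [set r : R | B k (1 - r)]) mB').
  + move=> k w; case/andP: (Z01 i k w) => z0 z1; apply/andP; split; lra.
  + move=> k.
    have H : (\int[P]_w ((1 - Z i k w)%:E + (Z i k w)%:E) =
        \int[P]_w (1 - Z i k w)%:E + \int[P]_w (Z i k w)%:E)%E.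
      apply: ge0_integralD => //.
      * by move=> w _; rewrite lee_fin subr_ge0; case/andP: (Z01 i k w).
      * apply/measurable_realfun.measurable_EFinP.
        apply: measurable_realfun.measurable_funB; first exact: measurable_cst.
        exact: mZ.
      * by move=> w _; rewrite lee_fin; case/andP: (Z01 i k w).
      * exact/measurable_realfun.measurable_EFinP.
    have H1 : (\int[P]_w ((1 - Z i k w)%:E + (Z i k w)%:E) = 1%:E)%E.
      rewrite -(int_one P); apply: eq_integral => w _; by rewrite -EFinD subrK.
    rewrite H1 meanE in H.
    by rewrite EFinB H addeK.
  + have -> : (fun w => (X' i w - x alpha) * (x alpha <= X' i w)%R%:R) =
        ((fun w => X' i w - x alpha) \max (fun _ => 0)).
      apply/funext => w /=; case: (boolP (x alpha <= X' i w)) => H /=.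
        by rewrite mulr1 max_l // subr_ge0.
      by rewrite mulr0 max_r // subr_le0 ltW // ltNge.
    apply: measurable_realfun.measurable_maxr; last exact: measurable_cst.
    apply: measurable_realfun.measurable_funB; last exact: measurable_cst.
    exact: mX.
  + by move=> w /=; rewrite X'E; apply: alg2_ge0.
  + move=> w /=; rewrite X'E sumrB sumr_const card_ord; apply: alg2 => //;
      first [exact: xmax | by case/andP: (x01 alpha) => _ -> ].
  + rewrite lee_fin; apply: alg3 => //.
    by rewrite subr_ge0; case/andP: (x01 alpha).
Qed.
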